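(* (a) For the complete graph $K_n$ with $n\ge 2$, $\gamma(K_n)=\dfrac{n}{n-1}$. (b) For the cycle $C_n$ with $n\ge 3$, $\gamma(C_n)=\dfrac{n}{\lfloor n/2\rfloor\,\lceil n/2\rceil}$.
   Context: For a finite simple undirected graph $G$ with $n$ vertices, let $\mathcal{F}=\{x\in\mathbb{R}^{V(G)} : \sum_{v} x_v = 0,\ \|x\|_\infty = 1\}$, for $x\in\mathcal{F}$ let $\gamma_x(G)=\max_{uv\in E(G)}|x_u-x_v|$, and $\gamma(G)=\min_{x\in\mathcal{F}}\gamma_x(G)$. *)

(* Defs.v *)
From HB Require Import structures.
From mathcomp Require Import all_boot all_order all_algebra.
From mathcomp Require Import reals.
Set Implicit Arguments. Unset Strict Implicit. Unset Printing Implicit Defensive.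
Import Order.TTheory GRing.Theory Num.Theory.
Local Open Scope ring_scope.

Definition simple_graph (T : finType) (e : rel T) : Prop :=
  (forall u v, e u v = e v u) /\ (forall u, ~~ e u u).

Definition supnorm (R : realType) (T : finType) (x : T -> R) : R :=
  \big[Num.max/0]_(v : T) `|x v|.

Definition feasible (R : realType) (T : finType) (x : T -> R) : Prop :=
  \sum_(v : T) x v = 0 /\ supnorm x = 1.

Definition gamma_x (R : realType) (T : finType) (e : rel T) (x : T -> R) : R :=
  \big[Num.max/0]_(p : T * T | e p.1 p.2) `|x p.1 - x p.2|.

(* "gamma(G) = g", where gamma(G) = min_{x in F} gamma_x(G):
   g is attained by some feasible x and is a lower bound over F. *)
Definition is_gamma (R : realType) (T : finType) (e : rel T) (g : R) : Prop :=
  (exists2 x : T -> R, feasible x & gamma_x e x = g) /\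
  (forall x : T -> R, feasible x -> g <= gamma_x e x).

Definition Kn_rel (n : nat) : rel 'I_n := fun i j => i != j.

Definition Cn_rel (n : nat) : rel 'I_n :=
  fun i j => (val j == (val i).+1 %% n)%N || (val i == (val j).+1 %% n)%N.

(* Main.v *)
Require Import Defs.
From HB Require Import structures.
From mathcomp Require Import all_boot all_order all_algebra.
From mathcomp Require Import reals ring lra zify.
Import Order.TTheory GRing.Theory Num.Theory.
Set Implicit Arguments. Unset Strict Implicit.
Local Open Scope ring_scope.

Lemma Ssum (n : nat) : (\sum_(0 <= k < n) minn k (n - k) = n./2 * uphalf n)%N.
Proof.
have H : forall n, (\sum_(0 <= k < n) minn k (n - k) = n./2 * uphalf n)%N /\
  (\sum_(0 <= k < n.+1) minn k (n.+1 - k) = n.+1./2 * uphalf n.+1)%N.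
  elim=> [|m [IH1 IH2]]; first by split; rewrite ?big_nat1 ?big_geq.
  split=> //.
  rewrite big_nat_recl // big_nat_recr //=.
  rewrite (eq_big_nat _ _ (F2 := fun i => minn i (m - i) + 1)%N); last first.
    move=> i /andP[_ Hi]; lia.
  rewrite big_split /= IH1 sum_nat_const_nat.
  rewrite !uphalf_half /=; lia.
by case: (H n).
Qed.

Section Gen.
Variable R : realType.

Lemma bigmax_leP (I : finType) (P : pred I) (F : I -> R) c :
  0 <= c -> (forall i, P i -> F i <= c) -> \big[Num.max/0]_(i | P i) F i <= c.
Proof.
move=> c0 H; elim/big_ind: _ => //.
  by move=> a b Ha Hb; rewrite ge_max Ha Hb.
Qed.

Lemma le_bigmaxP (I : finType) (P : pred I) (F : I -> R) i :
  P i -> F i <= \big[Num.max/0]_(i | P i) F i.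
Proof. by move=> Pi; rewrite (bigD1 i) //= le_max lexx. Qed.

Lemma bigmax_ex (I : finType) (F : I -> R) :
  \big[Num.max/0]_(i : I) F i = 0 \/ exists i, \big[Num.max/0]_(i : I) F i = F i.
Proof.
apply: (big_ind (fun b => b = 0 \/ exists i, b = F i)); [by left| |by move=> i _; right; exists i].
move=> a b Ha Hb; by case: (lerP a b).
Qed.

Lemma sup1_ex (T : finType) (x : T -> R) : supnorm x = 1 -> exists v, `|x v| = 1.
Proof.
rewrite /supnorm; case: (bigmax_ex (fun v => `|x v|)) => [->|[v ->]].
  by move=> /eqP; rewrite eq_sym oner_eq0.
by exists v.
Qed.

Lemma feasibleN (T : finType) (x : T -> R) : feasible x -> feasible (fun v => - x v).
Proof.
case=> h1 h2; split; first by rewrite sumrN h1 oppr0.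
by rewrite -h2 /supnorm; apply: eq_bigr => i _; rewrite normrN.
Qed.

Lemma gammaN (T : finType) (e : rel T) (x : T -> R) : gamma_x e (fun v => - x v) = gamma_x e x.
Proof. by rewrite /gamma_x; apply: eq_bigr => i _; rewrite -opprD normrN. Qed.

Lemma lb_wlog (T : finType) (e : rel T) (g : R) :
  (forall x v, feasible x -> x v = 1 -> g <= gamma_x e x) ->
  forall x, feasible x -> g <= gamma_x e x.
Proof.
move=> H x fx; have [v] := sup1_ex fx.2.
case: (ger0P (x v)) => _ hv.
  exact: (H x v).
rewrite -gammaN; apply: (H _ v); first exact: feasibleN.
exact: hv.
Qed.

Lemma gamma_edge (T : finType) (e : rel T) (x : T -> R) u v :
  e u v -> `|x u - x v| <= gamma_x e x.
Proof. by move=> h; exact: (@le_bigmaxP _ (fun p : T * T => e p.1 p.2) (fun p : T * T => `|x p.1 - x p.2|) (u, v)). Qed.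


Lemma Kn_part (n : nat) : (2 <= n)%N -> is_gamma (@Kn_rel n) (n%:R / (n.-1)%:R : R).
Proof.
case: n => [//|m] /= hm.
have m0 : 0 < m%:R :> R by rewrite ltr0n.
have hn : (m.+1)%:R = m%:R + 1 :> R by rewrite -addn1 natrD.
split.
- pose x := fun i : 'I_m.+1 => if val i == 0%N then 1 else - (m%:R)^-1 : R.
  have hx0 : x ord0 = 1 by [].
  have hxm : x ord_max = - (m%:R)^-1.
    rewrite /x /=; case: ifP => // /eqP h; lia.
  have hxb : forall i, `|x i| <= 1.
    move=> i; rewrite /x; case: ifP => _; first by rewrite normr1.
    rewrite normrN ger0_norm ?invr_ge0 ?ler0n // invf_le1 //.
    by rewrite ler1n; lia.
  exists x.
    split.
      rewrite (bigD1 ord0) //= hx0.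
      rewrite (eq_bigr (fun _ => - (m%:R)^-1)); last first.
        by move=> i /negbTE hi; rewrite /x; case: ifP => // /eqP h; move: hi; rewrite -val_eqE /= h.
      rewrite sumr_const cardC1 card_ord /= -[(- _) *+ _]mulr_natr mulNr mulVf ?subrr //.
      by rewrite lt0r_neq0.
    apply/le_anti/andP; split; first by apply: bigmax_leP.
    apply: le_trans (@le_bigmaxP _ xpredT (fun v => `|x v|) ord0 isT); by rewrite hx0 normr1.
  apply/le_anti/andP; split.
    apply: bigmax_leP; first by rewrite divr_ge0 ?ler0n.
    case=> i j /= hij; rewrite /x; case: ifP => _; case: ifP => _.
    + by rewrite subrr normr0 divr_ge0 ?ler0n.
    + rewrite opprK ger0_norm; last by rewrite addr_ge0 ?invr_ge0 ?ler0n.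
      by rewrite hn mulrDl divff ?lt0r_neq0 // mul1r addrC.
    + rewrite -opprD normrN ger0_norm; last by rewrite addr_ge0 ?invr_ge0 ?ler0n.
      by rewrite hn mulrDl divff ?lt0r_neq0 // mul1r addrC.
    + by rewrite subrr normr0 divr_ge0 ?ler0n.
  have := @gamma_edge _ (@Kn_rel m.+1) x ord0 ord_max.
  rewrite hx0 hxm opprK ger0_norm; last by rewrite addr_ge0 ?invr_ge0 ?ler0n.
  rewrite hn mulrDl divff ?lt0r_neq0 // mul1r addrC; apply.
  rewrite /Kn_rel -val_eqE /=; lia.
- apply: lb_wlog => x v fx xv.
  set G := gamma_x _ x.
  have hu : forall u, u != v -> 1 - G <= x u.
    move=> u hu; have h : `|x v - x u| <= G by apply: gamma_edge; rewrite /Kn_rel eq_sym.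
    rewrite xv in h; have := ler_norm (1 - x u); lra.
  have hs : (1 - G) *+ #|predC1 v| <= \sum_(u | u != v) x u.
    rewrite -sumr_const; exact: ler_sum.
  move: hs; rewrite cardC1 card_ord /= -mulr_natr.
  have := fx.1; rewrite (bigD1 v) //= xv => hsum hs.
  rewrite ler_pdivrMr // hn; nra.
Qed.


Lemma dist_edge (N i j : nat) : (i < N)%N -> (j < N)%N -> j = (i.+1 %% N)%N ->
  (minn j (N - j) <= (minn i (N - i)).+1)%N /\ (minn i (N - i) <= (minn j (N - j)).+1)%N.
Proof.
move=> hi hj ->; case: (ltnP i.+1 N) => h.
  rewrite modn_small //; lia.
have -> : i.+1 = N by lia.
rewrite modnn; lia.
Qed.

Lemma Cn_part (n : nat) : (3 <= n)%N ->
  is_gamma (@Cn_rel n) (n%:R / ((n./2)%:R * (uphalf n)%:R) : R).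
Proof.
case: n => [//|m] hm.
set N := m.+1.
set d := fun k : nat => minn k (N - k).
set P : R := (N./2)%:R * (uphalf N)%:R.
have P0 : 0 < P by rewrite /P -natrM ltr0n muln_gt0 uphalf_half; apply/andP; split; lia.
have hP : \sum_(i < N) (d i)%:R = P.
  by rewrite -natr_sum -(big_mkord xpredT d) Ssum natrM.
set g : R := N%:R / P.
have g0 : 0 <= g by rewrite divr_ge0 ?ler0n // ltW.
split.
- pose x := fun i : 'I_N => 1 - g * (d i)%:R.
  have hx0 : x ord0 = 1 by rewrite /x /d /= min0n mulr0 subr0.
  have hxb : forall i, `|x i| <= 1.
    move=> i; have h1 : (N * d i <= 2 * (N./2 * uphalf N))%N.
      have hd1 : (d i <= N./2)%N by rewrite /d; lia.
      have hd2 : (N <= 2 * uphalf N)%N by rewrite uphalf_half; lia.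
      apply: leq_trans (leq_mul hd2 hd1) _; nia.
    have h2 : g * (d i)%:R <= 2.
      rewrite /g mulrAC ler_pdivrMr // -natrM.
      rewrite /P -natrM -(natrM _ 2) ler_nat; exact: h1.
    have h3 : 0 <= g * (d i)%:R by rewrite mulr_ge0 ?ler0n.
    rewrite /x ler_norml; apply/andP; split; lra.
  exists x.
    split.
      rewrite sumrB sumr_const card_ord -mulr_sumr hP /g mulfVK ?lt0r_neq0 //.
      by rewrite subrr.
    apply/le_anti/andP; split; first by apply: bigmax_leP.
    apply: le_trans (@le_bigmaxP _ xpredT (fun v => `|x v|) ord0 isT); by rewrite hx0 normr1.
  apply/le_anti/andP; split.
    apply: bigmax_leP => // -[i j] /= hij.
    have hij' : (d j <= (d i).+1)%N /\ (d i <= (d j).+1)%N.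
      move: hij; rewrite /Cn_rel => /orP[/eqP h|/eqP h].
        exact: dist_edge (ltn_ord i) (ltn_ord j) h.
      by have [? ?] := dist_edge (ltn_ord j) (ltn_ord i) h; split.
    case: hij' => h1 h2.
    have e1 : (d j)%:R <= (d i)%:R + 1 :> R by rewrite natr1 ler_nat.
    have e2 : (d i)%:R <= (d j)%:R + 1 :> R by rewrite natr1 ler_nat.
    have -> : x i - x j = g * ((d j)%:R - (d i)%:R) by rewrite /x; ring.
    rewrite normrM (ger0_norm g0); apply: ler_piMr => //.
    rewrite ler_norml; apply/andP; split; lra.
  have i1 : (1 < N)%N by lia.
  have := @gamma_edge _ (@Cn_rel N) x ord0 (Ordinal i1).
  have -> : x ord0 - x (Ordinal i1) = g.
    rewrite /x /d /= min0n.
    have -> : minn 1 (N - 1) = 1%N by lia.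
    by rewrite /= mulr0 mulr1 subr0 opprB addrC subrK.
  rewrite ger0_norm //; apply.
  by rewrite /Cn_rel /= modn_small.
- apply: lb_wlog => x v fx xv.
  set G := gamma_x _ x.
  pose w := fun k : nat => (inord ((v + k) %% N) : 'I_N).
  have vw : forall k, val (w k) = ((v + k) %% N)%N.
    by move=> k; apply: inordK; rewrite ltn_pmod.
  pose y := fun k => x (w k).
  have ey : forall k, `|y k - y k.+1| <= G.
    move=> k; apply: gamma_edge; rewrite /Cn_rel !vw.
    by apply/orP; left; apply/eqP; rewrite -[((v + k) %% N).+1]addn1 modnDml addn1 addnS.
  have y0 : y 0%N = 1.
    rewrite /y -xv; congr x; apply: val_inj; rewrite vw addn0 modn_small //.
  have yN : y N = 1.
    rewrite /y -xv; congr x; apply: val_inj; rewrite vw modnDr modn_small //.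
  have fw : forall k, 1 - G * k%:R <= y k.
    elim=> [|k IH]; first by rewrite mulr0 subr0 y0.
    have := ey k; rewrite -natr1 mulrDr mulr1 => h.
    have := ler_norm (y k - y k.+1); lra.
  have bw : forall k, (k <= N)%N -> 1 - G * k%:R <= y (N - k)%N.
    elim=> [|k IH] hk; first by rewrite mulr0 subr0 subn0 yN.
    have e : (N - k = (N - k.+1).+1)%N by lia.
    have := ey (N - k.+1)%N; rewrite -e -natr1 mulrDr mulr1 => h.
    rewrite distrC in h.
    have := ler_norm (y (N - k)%N - y (N - k.+1)%N).
    have := IH (ltnW hk); lra.
  have hd : forall k, (k < N)%N -> 1 - G * (d k)%:R <= y k.
    move=> k hk; rewrite /d /=; case: (leqP k (N - k)) => h.
      exact: fw.
    have := bw (N - k)%N (leq_subr _ _); rewrite subKn //; exact: ltnW.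
  have hs : \sum_(i < N) x i = \sum_(k < N) y k.
    rewrite (reindex_inj (h := fun k : 'I_N => w k)) //.
    move=> a b /(congr1 val); rewrite !vw => /eqP.
    rewrite eqn_modDl !modn_small // => /eqP; exact: val_inj.
  have hle : \sum_(k < N) (1 - G * (d k)%:R) <= \sum_(k < N) y k.
    by apply: ler_sum => k _; apply: hd.
  move: hle; rewrite -hs fx.1 sumrB sumr_const card_ord -mulr_sumr hP => hle.
  rewrite /g ler_pdivrMr //; lra.
Qed.

End Gen.

Unset Implicit Arguments.
Theorem corollary3p3 (R : realType) :
  (forall n : nat, (2 <= n)%N ->
     is_gamma (@Kn_rel n) (n%:R / (n.-1)%:R : R)) /\
  (forall n : nat, (3 <= n)%N ->
     is_gamma (@Cn_rel n) (n%:R / ((n./2)%:R * (uphalf n)%:R) : R)).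
Proof. split; [exact: Kn_part | exact: Cn_part]. Qed.
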